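(* Let $\succcurlyeq$ be a preference relation on bets over a propositional language $\mathcal{L}$, and let $(\Omega,t,\lambda)$ and $(\Omega',t',\lambda')$ be subjective models of uncertainty representing $\succcurlyeq$ with $t$ sound, $t'$ exact and $\lambda'$ additive. Then for all strategies $s:\mathcal{L}\to\mathbb{R}$, $\int t_\circ(s)\,\mathrm{d}\lambda=\int t'_\bullet(s)\,\mathrm{d}\lambda'$.
   Context: Let $\mathbb{P}$ be a set of propositional variables containing distinguished $\mathbf{T}$, $\mathbf{F}$, and $\mathcal{L}$ the language generated by $\neg,\land,\lor$. A bet is a finitely supported $b:\mathcal{L}\to[0,1]$ summing to $1$. A truth valuation on $\Omega$ is $t:\mathcal{L}\to2^\Omega$ with $t(\mathbf{T})=\Omega,t(\mathbf{F})=\emptyset$; exact: logically equivalent statements have equal images; sound: exact, monotone ($\phi\implies\psi\Rightarrow t(\phi)\subseteq t(\psi)$), symmetric ($t(\neg\phi)=\Omega\setminus t(\phi)$) and $\land$-distributive; for sound $t$, $t(\mathcal{L})$ is a field. A likelihood appraisal on a field $\Sigma$ is $\lambda:\Sigma\to[0,1]$ with $\lambda(\emptyset)=0,\lambda(\Omega)=1$ (not necessarily monotone); additive if finitely additive. A subjective model $(\Omega,t,\lambda)$ represents $\succcurlyeq$ if $b\succcurlyeq b'\iff\sum_\phi b(\phi)\lambda(t(\phi))\ge\sum_\phi b'(\phi)\lambda(t(\phi))$. For a likelihood appraisal $\lambda$ and measurable $x:\Omega\to\mathbb{R}$, $\int x\,\mathrm{d}\lambda=\int_{-\infty}^{\infty}\lambda(\{\omega: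 x(\omega)\ge r\})\,\mathrm{d}r$ (Lebesgue integral over $\mathbb{R}$; for $x$ of finite range this is a finite sum). A strategy is a finitely supported $s:\mathcal{L}\to\mathbb{R}$; $t_\circ(s)=\sum_{\phi}s(\phi)\mathbf{1}_{t(\phi)}$. For $t(\mathcal{L})$-measurable $x$ with finite image $\{\alpha_1>\dots>\alpha_n\}$, $\alpha_{n+1}=0$, choosing $\phi_k$ with $t(\phi_k)=x^{-1}(\{\alpha_1,\dots,\alpha_k\})$, define $\xi^t_{t'}(x)=[\sum_{k=1}^n(\alpha_k-\alpha_{k+1})\mathbf{1}_{t'(\phi_k)}]$, the $\lambda'$-a.e. equivalence class. Then $t'_\bullet(s)=\xi^t_{t'}(t_\circ(s))$; this class does not depend on the choice of the sound representation $(\Omega,t,\lambda)$, and its integral against the additive $\lambda'$ is well defined. *)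

(* Defs.v *)
From HB Require Import structures.
From mathcomp Require Import all_boot all_order all_algebra.
From mathcomp Require Import mathcomp_extra boolp classical_sets functions
  cardinality fsbigop reals numfun.
Set Implicit Arguments. Unset Strict Implicit. Unset Printing Implicit Defensive.
Import Order.TTheory GRing.Theory Num.Theory.
Local Open Scope classical_set_scope.
Local Open Scope ring_scope.

Inductive lform (P : Type) : Type :=
  | Var of P
  | Neg of lform P
  | And of lform P & lform P
  | Or of lform P & lform P.

HB.instance Definition _ (P : Type) := gen_eqMixin (lform P).
HB.instance Definition _ (P : Type) := gen_choiceMixin (lform P).

Section Logic.
Variables (P : Type) (vT vF : P).

(* classical semantics; the distinguished variables T and F denote truth
   and falsity *)
Fixpoint feval (v : P -> bool) (phi : lform P) : bool :=
  match phi with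
  | Var p => v p
  | Neg a => ~~ feval v a
  | And a b => feval v a && feval v b
  | Or a b => feval v a || feval v b
  end.

Definition admissible (v : P -> bool) := v vT = true /\ v vF = false.

Definition implies (phi psi : lform P) :=
  forall v, admissible v -> feval v phi -> feval v psi.

Definition lequiv (phi psi : lform P) := implies phi psi /\ implies psi phi.

Variable Omega : Type.

Definition truth_valuation (t : lform P -> set Omega) :=
  t (Var vT) = setT /\ t (Var vF) = set0.

Definition exact (t : lform P -> set Omega) :=
  truth_valuation t /\ forall phi psi, lequiv phi psi -> t phi = t psi.

Definition sound (t : lform P -> set Omega) :=
  [/\ exact t,
      (forall phi psi, implies phi psi -> t phi `<=` t psi),
      (forall phi, t (Neg phi) = ~` t phi) &
      (forall phi psi, t (And phi psi) = t phi `&` t psi)].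
End Logic.

Section Appraisal.
Variables (Omega : Type) (R : realType).

Definition is_field (S : set (set Omega)) :=
  [/\ S set0,
      (forall A, S A -> S (~` A)) &
      (forall A B, S A -> S B -> S (A `|` B))].

(* likelihood appraisal on the field S (not necessarily monotone);
   lam is a total function whose values outside S are irrelevant *)
Definition likelihood_appraisal (S : set (set Omega)) (lam : set Omega -> R) :=
  [/\ forall A, S A -> 0 <= lam A <= 1, lam set0 = 0 & lam setT = 1].

Definition additive (S : set (set Omega)) (lam : set Omega -> R) :=
  forall A B, S A -> S B -> A `&` B = set0 -> lam (A `|` B) = lam A + lam B.

Definition subjective_model (P : Type) (vT vF : P) (t : lform P -> set Omega)
    (S : set (set Omega)) (lam : set Omega -> R) :=
  [/\ truth_valuation vT vF t, is_field S, (forall phi, S (t phi)) &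
      likelihood_appraisal S lam].

Definition is_bet (P : Type) (b : lform P -> R) :=
  [/\ finite_set [set phi | b phi != 0],
      (forall phi, 0 <= b phi <= 1) &
      (\sum_(phi \in [set: lform P]) b phi = 1)].

Definition bet_value (P : Type) (t : lform P -> set Omega) (lam : set Omega -> R)
    (b : lform P -> R) : R :=
  \sum_(phi \in [set: lform P]) b phi * lam (t phi).

Definition represents (P : Type) (pref : (lform P -> R) -> (lform P -> R) -> Prop)
    (t : lform P -> set Omega) (lam : set Omega -> R) :=
  forall b b', is_bet b -> is_bet b' ->
    (pref b b' <-> bet_value t lam b' <= bet_value t lam b).

Definition is_strategy (P : Type) (s : lform P -> R) :=
  finite_set [set phi | s phi != 0].

Definition t_circ (P : Type) (t : lform P -> set Omega) (s : lform P -> R)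
    : Omega -> R :=
  fun w => \sum_(phi \in [set: lform P]) s phi * \1_(t phi) w.

Definition dvals (x : Omega -> R) : seq R := sort >=%R (finmap.enum_fset (fset_set (range x))).

(* Choquet-type integral of a finite-range x against a likelihood appraisal:
   sum_{k=1}^n (alpha_k - alpha_{k+1}) lam(x^{-1}{alpha_1,...,alpha_k}),
   alpha_{n+1} = 0 (nth default 0). *)
Definition integral (lam : set Omega -> R) (x : Omega -> R) : R :=
  let vs := dvals x in
  \sum_(k < size vs)
     (vs`_k - vs`_k.+1) * lam [set w | x w \in take k.+1 vs].
End Appraisal.

Section Xi.
Variables (P : Type) (Omega Omega' : Type) (R : realType).

Definition xi_choice (t : lform P -> set Omega) (x : Omega -> R)
    (phi : nat -> lform P) :=
  forall k, (k < size (dvals x))%N ->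
    t (phi k) = [set w | x w \in take k.+1 (dvals x)].

(* a representative of xi^t_{t'}(x) *)
Definition xi (t' : lform P -> set Omega') (x : Omega -> R)
    (phi : nat -> lform P) : Omega' -> R :=
  fun w => let vs := dvals x in
    \sum_(k < size vs) (vs`_k - vs`_k.+1) * \1_(t' (phi k)) w.
End Xi.

(* Main.v *)
Require Import Defs.
From HB Require Import structures.
From mathcomp Require Import all_boot all_order all_algebra.
From mathcomp Require Import mathcomp_extra boolp classical_sets functions
  cardinality fsbigop reals numfun.
Set Implicit Arguments. Unset Strict Implicit. Unset Printing Implicit Defensive.
Module H.
Import Order.TTheory GRing.Theory Num.Theory.

Section SeqLemmas.
Local Open Scope ring_scope.
Variable R : realType.

Lemma tel (b : seq R) : \sum_(j < size b) (b`_j - b`_j.+1) = head 0 b.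
Proof.
elim: b => [|a b IH]; first by rewrite big_ord0.
by rewrite /= big_ord_recl /= IH nth0 subrK.
Qed.

Lemma tele (b : seq R) v : uniq b -> v \in b ->
  \sum_(j < size b) (b`_j - b`_j.+1) * (v \in take j.+1 b)%:R = v.
Proof.
elim: b => // a b IH /= /andP[anb ub]; rewrite in_cons => /orP[/eqP->|vb].
  rewrite (eq_bigr (fun j : 'I_(size b).+1 => ((a::b)`_j - (a::b)`_j.+1))).
    by rewrite (tel (a::b)).
  by move=> j _; rewrite /= in_cons eqxx mulr1.
have va : (v == a) = false by apply/negbTE; apply: contraNneq anb => <-.
rewrite big_ord_recl take0 /= mem_seq1 va mulr0 add0r -{2}(IH ub vb).
by apply: eq_bigr => j _; rewrite /bump /= add1n in_cons va.
Qed.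
End SeqLemmas.

Section BetLemmas.
Local Open Scope ring_scope.
Local Open Scope classical_set_scope.
Variables (R : realType) (T : choiceType).

Lemma fsum1 (a : T) (F : T -> R) : (forall x, x != a -> F x = 0) ->
  \sum_(x \in [set: T]) F x = F a.
Proof.
move=> H; rewrite -(fsbig_widen [set a]) ?fsbig_set1 //.
by move=> x [_ /= xa]; apply: H; apply/eqP.
Qed.

Lemma fsum2 (a c : T) (F : T -> R) : a != c ->
  (forall x, x != a -> x != c -> F x = 0) ->
  \sum_(x \in [set: T]) F x = F a + F c.
Proof.
move=> ac H; rewrite -(fsbig_widen [set a; c]) //.
  rewrite fsbigU0 ?fsbig_set1 //; try exact: finite_set1.
  by move=> x [/= -> xc]; move/eqP: ac; apply.
move=> x [_ /= xac]; apply: H; apply/eqP => xe; apply: xac; by [left|right].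
Qed.
End BetLemmas.

Section Agree.
Local Open Scope ring_scope.
Local Open Scope classical_set_scope.
Variables (R : realType) (P : Type) (vT vF : P).

Definition delta (f : lform P) : lform P -> R := fun x => (x == f)%:R.
Definition bp (p : R) : lform P -> R :=
  fun x => if x == Var vT then p else if x == Var vF then 1 - p else 0.

Lemma is_bet_delta f : is_bet (delta f).
Proof.
split.
- apply: (sub_finite_set _ (finite_set1 f)) => x /=.
  rewrite /delta; case: (eqVneq x f) => [->|] /=; first done.
  by rewrite eqxx.
- by move=> x; rewrite /delta; case: eqP => _; rewrite ?ler01 ?lexx.
- rewrite (@fsum1 R _ f); first by rewrite /delta eqxx.
  by move=> x xf; rewrite /delta (negbTE xf).
Qed.

Lemma is_bet_bp p : Var vT != Var vF -> 0 <= p <= 1 -> is_bet (bp p).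
Proof.
move=> TF /andP[p0 p1]; have FT : Var vF != Var vT by rewrite eq_sym.
split.
- apply: (sub_finite_set _ (finite_set2 (Var vT) (Var vF))) => x /=.
  rewrite /bp; have [->|xT] := eqVneq x (Var vT); first by left.
  by have [->|xF] := eqVneq x (Var vF); [right|rewrite eqxx].
- move=> x; rewrite /bp; have [_|_] := eqVneq x (Var vT); first by rewrite p0 p1.
  have [_|_] := eqVneq x (Var vF); last by rewrite lexx ler01.
  by rewrite subr_ge0 p1 gerBl p0.
- rewrite (@fsum2 R _ (Var vT) (Var vF)) //.
    by rewrite /bp eqxx (negbTE FT) ?eqxx addrC subrK.
  by move=> x /negbTE xT /negbTE xF; rewrite /bp xT xF.
Qed.

Variable Omega : Type.

Lemma bv_delta (t : lform P -> set Omega) lam f :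
  bet_value t lam (delta f) = lam (t f).
Proof.
rewrite /bet_value (@fsum1 R _ f) /delta ?eqxx ?mul1r //.
by move=> x /negbTE ->; rewrite mul0r.
Qed.

Lemma bv_bp (t : lform P -> set Omega) (lam : set Omega -> R) p :
  Var vT != Var vF -> truth_valuation vT vF t -> lam setT = 1 -> lam set0 = 0 ->
  bet_value t lam (bp p) = p.
Proof.
move=> TF [tT tF] l1 l0; have FT : Var vF != Var vT by rewrite eq_sym.
 rewrite /bet_value (@fsum2 R _ (Var vT) (Var vF)) //.
  rewrite /bp eqxx (negbTE FT) eqxx tT tF l1 l0.
  by rewrite mulr1 mulr0 addr0.
by move=> x /negbTE xT /negbTE xF; rewrite /bp xT xF mul0r.
Qed.

End Agree.

Section Agree2.
Local Open Scope ring_scope.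
Local Open Scope classical_set_scope.

Lemma agree (R : realType) (P : Type) (vT vF : P)
    (pref : (lform P -> R) -> (lform P -> R) -> Prop)
    (Omega : Type) (t : lform P -> set Omega) (S : set (set Omega))
    (lam : set Omega -> R)
    (Omega' : Type) (t' : lform P -> set Omega') (S' : set (set Omega'))
    (lam' : set Omega' -> R) :
  subjective_model vT vF t S lam ->
  subjective_model vT vF t' S' lam' ->
  represents pref t lam ->
  represents pref t' lam' ->
  forall f, lam (t f) = lam' (t' f).
Proof.
move=> [tv _ St [la l0 l1]] [tv' _ St' [la' l0' l1']] rep rep' f.
have TF : Var vT != Var vF.
  apply/eqP => e; move: l1; rewrite -tv.1 e tv.2 l0 => /eqP.
  by rewrite eq_sym oner_eq0.
have key : forall p, 0 <= p <= 1 -> (p <= lam (t f)) <-> (p <= lam' (t' f)).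
  move=> p hp.
  have := rep (delta R f) (bp vT vF p) (is_bet_delta R f) (is_bet_bp TF hp).
  have := rep' (delta R f) (bp vT vF p) (is_bet_delta R f) (is_bet_bp TF hp).
  rewrite !bv_delta !bv_bp // => h1 h2.
  by split => H; [apply/h1/h2/H | apply/h2/h1/H].
have hf := la _ (St f); have hg := la' _ (St' f).
apply/eqP; rewrite eq_le; apply/andP; split.
  by apply/(key _ hf).
by apply/(key _ hg).
Qed.
End Agree2.

Section Fin.
Local Open Scope ring_scope.
Local Open Scope classical_set_scope.
Variables (R : realType) (Omega : Type) (S : set (set Omega)) (lam : set Omega -> R).
Hypotheses (HS : is_field S) (Hadd : Defs.additive S lam) (l0 : lam set0 = 0).
Variables (n : nat) (A : 'I_n -> set Omega).
Hypothesis HA : forall k, S (A k).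

Lemma fieldT : S setT.
Proof. by case: HS => h0 hC _; rewrite -setC0; apply: hC. Qed.

Lemma fieldI X Y : S X -> S Y -> S (X `&` Y).
Proof.
case: HS => _ hC hU hX hY; rewrite -[X `&` Y]setCK setCI.
by apply hC; apply hU; apply hC.
Qed.

Definition E (w : Omega) : {ffun 'I_n -> bool} := [ffun k => w \in A k].

Lemma atomS (e : {ffun 'I_n -> bool}) : S [set w | E w = e].
Proof.
have H : forall r : seq 'I_n,
    S [set w | forall k, k \in r -> (w \in A k) = e k].
  elim=> [|k r IH].
    suff -> : [set w | forall k, k \in [::] -> (w \in A k) = e k] = setT.
      exact: fieldT.
    by apply/seteqP; split => w //= _ k.
  have -> : [set w | forall k0, k0 \in k :: r -> (w \in A k0) = e k0] =
      (if e k then A k else ~` A k) `&`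
      [set w | forall k, k \in r -> (w \in A k) = e k].
    apply/seteqP; split => w /=.
      move=> h; split; last by move=> k0 kr; apply: h; rewrite in_cons kr orbT.
      have := h k (mem_head _ _); case: (e k) => hw; first exact: set_mem.
      by move=> Aw; rewrite (mem_set Aw) in hw.
    move=> [hk h] k0; rewrite in_cons => /orP[/eqP->|]; last exact: h.
    move: hk; case: (e k) => hk; first exact: mem_set.
    by apply/negbTE; apply/negP => /set_mem.
  apply: fieldI => //; case: (e k) => //; case: HS => _ hC _; exact: hC.
suff -> : [set w | E w = e] =
   [set w | forall k, k \in enum 'I_n -> (w \in A k) = e k] by [].
apply/seteqP; split => w /=.
  by move=> <- k _; rewrite ffunE.
by move=> h; apply/ffunP => k; rewrite ffunE h ?mem_enum.
Qed.

Definition mu e := lam [set w | E w = e].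

Lemma Useq (s : seq {ffun 'I_n -> bool}) : uniq s ->
  S [set w | E w \in s] /\ lam [set w | E w \in s] = \sum_(e <- s) mu e.
Proof.
elim: s => [|e s IH] /=.
  have -> : [set w | E w \in [::]] = set0 by apply/seteqP; split => w //=.
  by rewrite big_nil; split; [case: HS|].
move=> /andP[es us]; have [IHS IHl] := IH us.
have -> : [set w | E w \in e :: s] = [set w | E w = e] `|` [set w | E w \in s].
  apply/seteqP; split => w /=; rewrite ?in_cons.
    by move/orP => [/eqP->|]; [left|right].
  by case=> [->|->]; rewrite ?eqxx ?orbT.
split; first by case: HS => _ _ HU; apply: HU => //; exact: atomS.
rewrite Hadd ?big_cons ?IHl //; first exact: atomS.
apply/seteqP; split => w //= [Ew Ews]; rewrite Ew in Ews.
by rewrite Ews in es.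
Qed.

Lemma Lp (p : pred {ffun 'I_n -> bool}) :
  lam [set w | p (E w)] = \sum_(e | p e) mu e.
Proof.
have [_ H] := Useq (filter_uniq p (index_enum_uniq {ffun 'I_n -> bool})).
have -> : [set w | p (E w)] =
    [set w | E w \in filter p (index_enum {ffun 'I_n -> bool})].
  by apply/seteqP; split => w /=; rewrite mem_filter mem_index_enum andbT.
by rewrite H big_filter.
Qed.


Lemma fin_integral (c : 'I_n -> R) :
  Defs.integral lam (fun w => \sum_(k < n) c k * \1_(A k) w) =
  \sum_(k < n) c k * lam (A k).
Proof.
set y := fun w => _.
pose val (e : {ffun 'I_n -> bool}) := \sum_(k < n) c k * (e k)%:R.
have yE : forall w, y w = val (E w).
  by move=> w; rewrite /y /val; apply: eq_bigr => k _; rewrite ffunE indicE.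
have -> : \sum_(k < n) c k * lam (A k) = \sum_e val e * mu e.
  transitivity (\sum_(k < n) c k * \sum_(e : {ffun 'I_n -> bool} | e k) mu e).
    apply: eq_bigr => k _; rewrite -Lp; congr (_ * lam _).
    apply/seteqP; split => w /=; rewrite ffunE; [exact: mem_set|exact: set_mem].
  rewrite /val; under eq_bigr => k _ do rewrite big_mkcond mulr_sumr /=.
  rewrite exchange_big /=; apply: eq_bigr => e _; rewrite mulr_suml.
  by apply: eq_bigr => k _; case: (e k); rewrite ?mulr1 ?mulr0 ?mul0r.
rewrite /Defs.integral /=.
set b := dvals y.
have fin : finite_set (range y).
  apply: (sub_finite_set _ (finite_image val (@finite_finset _ setT))).
  by move=> _ [w _ <-]; exists (E w) => //; rewrite yE.
have ub : uniq b by rewrite sort_uniq finmap.fset_uniq.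
have memb : forall w, y w \in b.
  move=> w; rewrite /b /dvals mem_sort in_fset_set //.
  by apply: mem_set; exists w.
transitivity (\sum_(j < size b) (b`_j - b`_j.+1) *
                \sum_(e | val e \in take j.+1 b) mu e).
  apply: eq_bigr => j _; rewrite -Lp; congr (_ * lam _).
  by apply/seteqP; split => w /=; rewrite yE.
rewrite [LHS](eq_bigr (fun j : 'I_(size b) => \sum_e (b`_j - b`_j.+1) *
   (if val e \in take j.+1 b then mu e else 0))); last first.
  by move=> j _; rewrite big_mkcond mulr_sumr.
rewrite exchange_big /=; apply: eq_bigr => e _.
transitivity ((\sum_(j < size b) (b`_j - b`_j.+1) * (val e \in take j.+1 b)%:R) * mu e).
  rewrite mulr_suml; apply: eq_bigr => j _.
  by case: (_ \in _); rewrite ?mulr1 ?mulr0 ?mul0r.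
have [[w Ew]|none] := pselect (exists w, E w = e).
  by rewrite tele // -Ew -yE; exact: memb.
have -> : mu e = 0.
  rewrite /mu; suff -> : [set w | E w = e] = set0 by [].
  by apply/seteqP; split => w //= Ew; apply: none; exists w.
by rewrite !mulr0.
Qed.

End Fin.

End H.

Theorem proposition9 (R : realType) (P : Type) (vT vF : P)
    (pref : (lform P -> R) -> (lform P -> R) -> Prop)
    (Omega : Type) (t : lform P -> set Omega) (S : set (set Omega))
    (lam : set Omega -> R)
    (Omega' : Type) (t' : lform P -> set Omega') (S' : set (set Omega'))
    (lam' : set Omega' -> R) :
  subjective_model vT vF t S lam ->
  subjective_model vT vF t' S' lam' ->
  represents pref t lam ->
  represents pref t' lam' ->
  sound vT vF t -> exact vT vF t' -> additive S' lam' ->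
  forall s : lform P -> R, is_strategy s ->
  forall phi : nat -> lform P, xi_choice t (t_circ t s) phi ->
    integral lam (t_circ t s) = integral lam' (xi t' (t_circ t s) phi).
Proof.
move=> M M' rep rep' _ _ Hadd s _ phi Hxi.
have [_ HS' St' [_ l0' _]] := M'.
transitivity (\sum_(k < size (dvals (t_circ t s)))
  (((dvals (t_circ t s))`_k - (dvals (t_circ t s))`_k.+1) * lam' (t' (phi k))))%R.
  rewrite /integral /=; apply: eq_bigr => k _.
  by rewrite -(Hxi k (ltn_ord k)) (H.agree M M' rep rep').
rewrite /xi; symmetry.
exact: (H.fin_integral HS' Hadd l0' (fun k => St' (phi k))).
Qed.
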